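(* Let $n\ge 2$ be an integer and $A\subseteq L_n$. If $(X_n,\tau(A))$ is normal or countably paracompact, then $L_n\setminus A$ does not contain a closed uncountable subset of $(L_n,\tau_E|_{L_n})$.
   Context: For $\overline{x},\overline{a}\in\mathbb R^n$ let $|\overline{x}-\overline{a}|$ be the Euclidean distance and $B(\overline{a},\epsilon)=\{\overline{x}\in\mathbb R^n:|\overline{x}-\overline{a}|<\epsilon\}$. Let $P_n=\{\overline{x}\in\mathbb R^n: x_n>0\}$, $L_n=\{\overline{x}\in\mathbb R^n: x_n=0\}$, $X_n=P_n\cup L_n$, and let $\tau_E$ denote the Euclidean topology on $X_n$. For $\overline{a}\in L_n$ and $\epsilon>0$ put $\overline{a(\epsilon)}=(a_1,\dots,a_{n-1},\epsilon)$ and $\tilde B(\overline{a},\epsilon)=\{\overline{a}\}\cup B(\overline{a(\epsilon)},\epsilon)$. For $A\subseteq L_n$, the topology $\tau(A)$ on $X_n$ is generated by the local bases: at $\overline{a}\in P_n$, the sets $B(\overline{a},\epsilon)$ with $0<\epsilon<a_n$; at $\overline{a}\in A$, the sets $B(\overline{a},\epsilon)\cap X_n$ with $\epsilon>0$; at $\overline{a}\in L_n\setminus A$, the sets $\tilde B(\overline{a},\epsilon)$ with $\epsilon>0$. *)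

(* Defs.v *)
From Stdlib Require Import Reals.
From mathcomp Require Import all_boot.
Set Implicit Arguments. Unset Strict Implicit. Unset Printing Implicit Defensive.

Local Open Scope R_scope.

Definition pt (n : nat) := 'I_n -> R.

Definition edist (n : nat) (x a : pt n) : R :=
  sqrt (\big[Rplus/0]_(i < n) ((x i - a i) ^ 2)).

Definition eball (n : nat) (a : pt n) (eps : R) : pt n -> Prop :=
  fun x => edist x a < eps.

Definition lastc (n : nat) : pt n -> R :=
  match n return pt n -> R with
  | 0 => fun _ => 0
  | m.+1 => fun x => x ord_max
  end.

Definition Pn (n : nat) (x : pt n) : Prop := 0 < lastc x.
Definition Ln (n : nat) (x : pt n) : Prop := lastc x = 0.
Definition Xn (n : nat) (x : pt n) : Prop := Pn x \/ Ln x.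

Definition lift_pt (n : nat) (a : pt n) (eps : R) : pt n :=
  fun i => if (i : nat) == n.-1 then eps else a i.

Definition tball (n : nat) (a : pt n) (eps : R) : pt n -> Prop :=
  fun x => x = a \/ eball (lift_pt a eps) eps x.

Definition has_basic_nbhd (n : nat) (A : pt n -> Prop) (a : pt n)
    (U : pt n -> Prop) : Prop :=
  (Pn a /\ exists eps, 0 < eps /\ eps < lastc a /\
     (forall x, eball a eps x -> U x))
  \/ (Ln a /\ A a /\ exists eps, 0 < eps /\
     (forall x, eball a eps x -> Xn x -> U x))
  \/ (Ln a /\ ~ A a /\ exists eps, 0 < eps /\
     (forall x, tball a eps x -> U x)).

Definition tau_open (n : nat) (A : pt n -> Prop) (U : pt n -> Prop) : Prop :=
  (forall x, U x -> Xn x) /\ (forall a, U a -> has_basic_nbhd A a U).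

Definition tau_closed (n : nat) (A : pt n -> Prop) (C : pt n -> Prop) : Prop :=
  (forall x, C x -> Xn x) /\ tau_open A (fun x => Xn x /\ ~ C x).

Definition disjoint_sets (n : nat) (E F : pt n -> Prop) : Prop :=
  forall x, E x -> F x -> False.

(* (X_n, tau(A)) is normal: disjoint closed sets have disjoint open
   neighbourhoods (the space is T1 anyway) *)
Definition tau_normal (n : nat) (A : pt n -> Prop) : Prop :=
  forall E F, tau_closed A E -> tau_closed A F -> disjoint_sets E F ->
  exists U V, tau_open A U /\ tau_open A V /\
    (forall x, E x -> U x) /\ (forall x, F x -> V x) /\ disjoint_sets U V.

(* (X_n, tau(A)) is countably paracompact: every countable open cover has
   a locally finite open refinement (family of sets given as a predicate
   on sets) *)
Definition tau_countably_paracompact (n : nat) (A : pt n -> Prop) : Prop :=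
  forall U : nat -> (pt n -> Prop),
    (forall k, tau_open A (U k)) ->
    (forall x, Xn x -> exists k, U k x) ->
    exists W : (pt n -> Prop) -> Prop,
      (forall V, W V -> tau_open A V) /\
      (forall V, W V -> exists k, forall x, V x -> U k x) /\
      (forall x, Xn x -> exists V, W V /\ V x) /\
      (forall x, Xn x -> exists O, tau_open A O /\ O x /\
         exists l : list (pt n -> Prop),
           forall V, W V -> (exists y, O y /\ V y) -> List.In V l).

Definition eclosed_in_Ln (n : nat) (C : pt n -> Prop) : Prop :=
  (forall x, C x -> Ln x) /\
  forall x, Ln x -> ~ C x ->
    exists eps, 0 < eps /\ forall y, Ln y -> edist y x < eps -> ~ C y.

Definition countable_set (n : nat) (C : pt n -> Prop) : Prop :=
  exists f : pt n -> nat, forall x y, C x -> C y -> f x = f y -> x = y.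

(* Main.v *)
Require Import Defs.
From Stdlib Require Import Reals Lra ClassicalEpsilon Classical FunctionalExtensionality.
From mathcomp Require Import all_boot zify.
Set Implicit Arguments. Unset Strict Implicit. Unset Printing Implicit Defensive.
From HB Require Import structures.
Local Open Scope R_scope.

HB.instance Definition _ := Monoid.isComLaw.Build R 0 Rplus (fun a b c => esym (Rplus_assoc a b c)) Rplus_comm Rplus_0_l.

Lemma bigR_recr (k : nat) (F : 'I_k.+1 -> R) :
  \big[Rplus/0]_(i < k.+1) F i =
  Rplus (\big[Rplus/0]_(i < k) F (widen_ord (leqnSn k) i)) (F ord_max).
Proof. exact: big_ord_recr. Qed.

Lemma sum_nonneg (k : nat) (F : 'I_k -> R) :
  (forall i, 0 <= F i) -> 0 <= \big[Rplus/0]_(i < k) F i.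
Proof.
move=> H; elim: k F H => [|k IH] F H; first by rewrite big_ord0; lra.
rewrite bigR_recr. have := IH (fun i => F (widen_ord (leqnSn k) i)) (fun i => H _).
have := H ord_max. lra.
Qed.

Lemma single_le_sum (k : nat) (F : 'I_k -> R) (i : 'I_k) :
  (forall i, 0 <= F i) -> F i <= \big[Rplus/0]_(i < k) F i.
Proof.
elim: k F i => [|k IH] F i H; first by case: i.
rewrite bigR_recr.
have H0 := @sum_nonneg _ (fun i => F (widen_ord (leqnSn k) i)) (fun i => H _).
case: (ltnP i k) => hi.
- have := IH (fun i => F (widen_ord (leqnSn k) i)) (Ordinal hi) (fun i => H _).
  have -> : widen_ord (leqnSn k) (Ordinal hi) = i by apply: val_inj.
  have := H ord_max. lra.
- have -> : i = ord_max by apply: val_inj => /=; have := ltn_ord i; lia.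
  lra.
Qed.

Lemma sum_le_const (k : nat) (F : 'I_k -> R) c :
  (forall i, F i <= c) -> \big[Rplus/0]_(i < k) F i <= INR k * c.
Proof.
elim: k F => [|k IH] F H; first by rewrite big_ord0 /=; lra.
rewrite bigR_recr S_INR.
have := IH (fun i => F (widen_ord (leqnSn k) i)) (fun i => H _).
have := H ord_max. lra.
Qed.

Lemma coord_le_edist n (x y : pt n) i : Rabs (x i - y i) <= edist x y.
Proof.
rewrite /edist.
rewrite -sqrt_Rsqr_abs. apply: sqrt_le_1_alt.
have := @single_le_sum _ (fun i => (x i - y i) ^ 2) i (fun i => pow2_ge_0 _).
rewrite /Rsqr /=. lra.
Qed.

Lemma edist_lt_coord m (x y : pt m.+1) eta eps :
  (forall i, Rabs (x i - y i) <= eta) -> 0 <= eta -> INR m.+1 * eta < eps ->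
  edist x y < eps.
Proof.
move=> H he hl.
have hm : 1 <= INR m.+1 by rewrite S_INR; have := pos_INR m; lra.
have hs : \big[Rplus/0]_(i < m.+1) ((x i - y i) ^ 2) <= INR m.+1 * (eta ^ 2).
  apply: sum_le_const => i. have := H i. have := Rabs_pos (x i - y i).
  rewrite -(pow2_abs (x i - y i)). nra.
have hep : 0 < eps by nra.
rewrite /edist -(sqrt_pow2 eps); last lra.
apply: sqrt_lt_1_alt. split; first by apply: sum_nonneg => i; apply: pow2_ge_0.
have h1 : INR m.+1 * eta ^ 2 <= (INR m.+1 * eta) ^ 2 by nra.
have h2 : (INR m.+1 * eta) ^ 2 < eps ^ 2 by have := Rmult_le_pos _ _ (Rle_trans _ _ _ Rle_0_1 hm) he; nra.
lra.
Qed.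

Definition sd n (x y : pt n) : R := foldr Rmax 0 [seq Rabs (x i - y i) | i <- enum 'I_n].

Lemma foldr_max_ge (T : eqType) (s : seq T) (f : T -> R) a :
  a \in s -> f a <= foldr Rmax 0 (map f s).
Proof.
elim: s => [|b s IH] //= ; rewrite inE => /orP [/eqP -> | h].
- apply: Rmax_l.
- apply: Rle_trans (IH h) _; apply: Rmax_r.
Qed.

Lemma foldr_max_ge0 (T : Type) (s : seq T) (f : T -> R) : 0 <= foldr Rmax 0 (map f s).
Proof. elim: s => [|b s IH] /=; first lra. apply: Rle_trans IH _; apply: Rmax_r. Qed.

Lemma foldr_max_le (T : eqType) (s : seq T) (f : T -> R) r :
  0 <= r -> (forall a, a \in s -> f a <= r) -> foldr Rmax 0 (map f s) <= r.
Proof.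
move=> h0; elim: s => [|b s IH] H /=; first by [].
apply: Rmax_lub; first by apply: H; rewrite inE eqxx.
apply: IH => a ha; apply: H; by rewrite inE ha orbT.
Qed.

Lemma foldr_max_lt (T : eqType) (s : seq T) (f : T -> R) r :
  0 < r -> (forall a, a \in s -> f a < r) -> foldr Rmax 0 (map f s) < r.
Proof.
move=> h0; elim: s => [|b s IH] H /=; first by [].
apply: Rmax_lub_lt; first by apply: H; rewrite inE eqxx.
apply: IH => a ha; apply: H; by rewrite inE ha orbT.
Qed.

Lemma sd_coord n (x y : pt n) i : Rabs (x i - y i) <= sd x y.
Proof. by apply: (foldr_max_ge (fun i => Rabs (x i - y i))); rewrite mem_enum. Qed.

Lemma sd_ge0 n (x y : pt n) : 0 <= sd x y.
Proof. exact: foldr_max_ge0. Qed.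

Lemma sd_le n (x y : pt n) r : 0 <= r -> (forall i, Rabs (x i - y i) <= r) -> sd x y <= r.
Proof. move=> h H; apply: foldr_max_le => // a _; apply: H. Qed.

Lemma sd_lt n (x y : pt n) r : 0 < r -> (forall i, Rabs (x i - y i) < r) -> sd x y < r.
Proof. move=> h H; apply: foldr_max_lt => // a _; apply: H. Qed.

Lemma sd_sym n (x y : pt n) : sd x y = sd y x.
Proof.
apply: Rle_antisym; apply: sd_le; try apply: sd_ge0; move=> i;
rewrite Rabs_minus_sym; apply: sd_coord.
Qed.

Lemma sd_tri n (x y z : pt n) : sd x z <= sd x y + sd y z.
Proof.
apply: sd_le; first by have := sd_ge0 x y; have := sd_ge0 y z; lra.
move=> i. have := sd_coord x y i; have := sd_coord y z i.
have := Rabs_triang (x i - y i) (y i - z i).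
have -> : x i - y i + (y i - z i) = x i - z i by ring. lra.
Qed.

Lemma sd_pos n (x y : pt n) : x <> y -> 0 < sd x y.
Proof.
move=> hxy. case: (Rle_lt_dec (sd x y) 0) => // h.
exfalso; apply: hxy; apply: functional_extensionality => i.
have := sd_coord x y i. have := Rabs_pos (x i - y i).
move=> h1 h2. have h3 : Rabs (x i - y i) = 0 by lra.
move: h3; rewrite /Rabs; case: Rcase_abs; lra.
Qed.

Lemma sqrt_lt_of X r : 0 <= r -> 0 <= X < r ^ 2 -> sqrt X < r.
Proof. move=> hr hX. have := sqrt_lt_1_alt X (r ^ 2) hX. by rewrite sqrt_pow2. Qed.

Lemma tangent_half m (a w : pt m.+1) eta t r :
  a ord_max = 0 -> w ord_max = t -> 0 < t -> t <= r -> 0 <= eta ->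
  INR m.+1 * eta < t ->
  (forall i : 'I_m.+1, (i < m)%N -> Rabs (w i - a i) <= eta) ->
  edist w (lift_pt a r) < r.
Proof.
move=> ha hw ht htr he hl H.
rewrite /edist bigR_recr.
have hs : \big[Rplus/0]_(i < m) ((w (widen_ord (leqnSn m) i) - lift_pt a r (widen_ord (leqnSn m) i)) ^ 2)
   <= INR m * eta ^ 2.
  apply: sum_le_const => i.
  have -> : lift_pt a r (widen_ord (leqnSn m) i) = a (widen_ord (leqnSn m) i).
    rewrite /lift_pt /=. have := ltn_ord i. by case: eqP => // ->; rewrite ltnn.
  have := H (widen_ord (leqnSn m) i) (ltn_ord i).
  set v := w _ - a _. move=> hv. have := Rabs_pos v. rewrite -(pow2_abs v). nra.
have -> : lift_pt a r ord_max = r by rewrite /lift_pt /= eqxx.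
rewrite hw.
have hr : 0 < r by lra.
apply: sqrt_lt_of; first lra. split.
  apply: Rplus_le_le_0_compat; last by apply: pow2_ge_0.
  by apply: sum_nonneg => i; apply: pow2_ge_0.
rewrite S_INR in hl. have hm := pos_INR m.
have h3 : (INR m + 1) * eta * ((INR m + 1) * eta) < t * t.
  apply: Rmult_le_0_lt_compat; nra.
have h4 : INR m * (eta * eta) <= (INR m + 1) * eta * ((INR m + 1) * eta).
  have : 0 <= eta * eta by nra.
  have : INR m <= (INR m + 1) * (INR m + 1) by nra.
  nra.
have h5 : t * t <= 2 * t * r - t * t by nra.
move: hs. set S := \big[Rplus/0]_(i < m) _. move=> hs.
have : INR m * eta ^ 2 = INR m * (eta * eta) by ring.
nra.
Qed.

Lemma half_abs v eta : Rabs v <= eta -> Rabs (v / 2) <= eta.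
Proof. rewrite /Rabs; do 2 case: Rcase_abs; lra. Qed.

Lemma tangent_meet m (a b : pt m.+1) eta r s :
  a ord_max = 0 -> b ord_max = 0 -> 0 < r -> 0 < s -> 0 <= eta ->
  (forall i, Rabs (a i - b i) <= eta) -> INR m.+1 * eta < Rmin r s ->
  exists z, tball a r z /\ tball b s z.
Proof.
move=> ha hb hr hs he H hl.
pose t := Rmin r s.
have ht : 0 < t by apply: Rmin_pos.
exists (fun i : 'I_m.+1 => if (i : nat) == m then t else (a i + b i) / 2).
split; right; rewrite /eball.
- apply: (@tangent_half m a _ eta t r) => //; first by rewrite /= eqxx.
  + apply: Rmin_l.
  + move=> i hi. have -> : ((i : nat) == m) = false by apply/eqP; lia.
    have := H i. have -> : (a i + b i) / 2 - a i = - ((a i - b i) / 2) by field.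
    rewrite Rabs_Ropp; apply: half_abs.
- apply: (@tangent_half m b _ eta t s) => //; first by rewrite /= eqxx.
  + apply: Rmin_r.
  + move=> i hi. have -> : ((i : nat) == m) = false by apply/eqP; lia.
    have := H i. have -> : (a i + b i) / 2 - b i = ((a i - b i) / 2) by field.
    apply: half_abs.
Qed.

Lemma cnt_sub n (S T : pt n -> Prop) :
  countable_set S -> (forall x, T x -> S x) -> countable_set T.
Proof. move=> [f hf] H; exists f => x y hx hy; apply: hf; auto. Qed.

Lemma cnt_empty n (S : pt n -> Prop) : (forall x, ~ S x) -> countable_set S.
Proof. move=> H; exists (fun _ => 0%N) => x y hx; by case: (H x). Qed.

Lemma cnt_range n (d : nat -> pt n) (P : nat -> Prop) :
  countable_set (fun z => exists i, P i /\ z = d i).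
Proof.
exists (fun z => epsilon (inhabits 0%N) (fun i => P i /\ z = d i)) => x y hx hy e.
have [_ h1] := epsilon_spec (inhabits 0%N) _ hx.
have [_ h2] := epsilon_spec (inhabits 0%N) _ hy.
by rewrite h1 h2 e.
Qed.

Lemma cnt_union n (S : pt n -> Prop) (T : nat -> pt n -> Prop) :
  (forall x, S x -> exists q, T q x) ->
  (forall q, countable_set (fun x => S x /\ T q x)) -> countable_set S.
Proof.
move=> hc hq.
pose fq q := epsilon (inhabits (fun _ : pt n => 0%N))
  (fun f => forall x y, (S x /\ T q x) -> (S y /\ T q y) -> f x = f y -> x = y).
pose qx x := epsilon (inhabits 0%N) (fun q => T q x).
exists (fun x => pickle (qx x, fq (qx x) x)) => x y hx hy /(pcan_inj pickleK) [e1 e2].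
have tx : T (qx x) x := epsilon_spec (inhabits 0%N) (fun q => T q x) (hc x hx).
have ty : T (qx y) y := epsilon_spec (inhabits 0%N) (fun q => T q y) (hc y hy).
rewrite -e1 in ty e2.
have H := epsilon_spec (inhabits (fun _ : pt n => 0%N)) _ (hq (qx x)).
by apply: (H x y).
Qed.

Lemma cnt_union2 n (S1 S2 : pt n -> Prop) :
  countable_set S1 -> countable_set S2 -> countable_set (fun x => S1 x \/ S2 x).
Proof.
move=> h1 h2.
apply: (@cnt_union _ _ (fun q x => if q is 0%N then S1 x else S2 x)).
- move=> x [h|h]; [by exists 0%N | by exists 1%N].
- case=> [|q].
  + by apply: (cnt_sub h1) => x [].
  + by apply: (cnt_sub h2) => x [].
Qed.

Lemma uncnt_diff n (S Z : pt n -> Prop) :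
  ~ countable_set S -> countable_set Z -> ~ countable_set (fun x => S x /\ ~ Z x).
Proof.
move=> hS hZ hD; apply: hS.
apply: (@cnt_sub _ (fun x => (S x /\ ~ Z x) \/ Z x)); first exact: cnt_union2.
move=> x hx; case: (classic (Z x)); tauto.
Qed.

Definition CT n := ({ffun 'I_n -> bool * nat} * nat)%type.
Definition decode n (q : nat) : CT n :=
  odflt ([ffun _ => (true, 0%N)], 0%N) (unpickle q).
Definition cen n (q : nat) : pt n := fun i =>
  (if ((decode n q).1 i).1 then 1 else -1) * INR ((decode n q).1 i).2 / INR (decode n q).2.+1.
Definition rad n (q : nat) : R := / INR (decode n q).2.+1.

Arguments cen : clear implicits.
Arguments rad : clear implicits.
Arguments decode : clear implicits.

Lemma rad_pos n q : 0 < rad n q.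
Proof. apply: Rinv_0_lt_compat; apply: lt_0_INR; lia. Qed.

Lemma IZR_sgn (z : Z) : IZR z = (if (0 <=? z)%Z then 1 else -1) * INR (Z.abs_nat z).
Proof.
case: z => [|p|p] /=; first lra.
- by rewrite Rmult_1_l INR_IPR.
- rewrite INR_IPR; change (IZR (Z.neg p)) with (- IPR p); ring.
Qed.

Lemma rat_approx n (y : pt n) rho : 0 < rho ->
  exists q, sd y (cen n q) < rad n q /\ forall z, sd z (cen n q) < rad n q -> sd z y < rho.
Proof.
move=> hr.
have [N [hN hN0]] := archimed_cor1 (rho / 2) ltac:(lra).
have hNp : 0 < INR N by apply: lt_0_INR.
pose z i : Z := (up (y i * INR N) - 1)%Z.
pose t : CT n := ([ffun i => ((0 <=? z i)%Z, Z.abs_nat (z i))], N.-1).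
exists (pickle t).
have hdec : decode n (pickle t) = t by rewrite /decode pickleK.
have hN1 : INR (N.-1).+1 = INR N by congr INR; lia.
have hcen : forall i, cen n (pickle t) i = IZR (z i) / INR N.
  move=> i; rewrite /cen hdec.
  change ((if ([ffun i => ((0 <=? z i)%Z, Z.abs_nat (z i))] i).1 then 1 else -1) *
    INR ([ffun i => ((0 <=? z i)%Z, Z.abs_nat (z i))] i).2 / INR N.-1.+1 = IZR (z i) / INR N).
  by rewrite ffunE hN1 -IZR_sgn.
have hrad : rad n (pickle t) = / INR N.
  rewrite /rad hdec; change (/ INR N.-1.+1 = / INR N); by rewrite hN1.
have h1 : sd y (cen n (pickle t)) < rad n (pickle t).
  rewrite hrad; apply: sd_lt; first by apply: Rinv_0_lt_compat.
  move=> i; rewrite hcen.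
  have [ha hb] := archimed (y i * INR N).
  rewrite /z minus_IZR.
  have -> : y i - (IZR (up (y i * INR N)) - 1) / INR N
          = (y i * INR N - (IZR (up (y i * INR N)) - 1)) / INR N by field; lra.
  rewrite /Rdiv Rabs_mult (Rabs_right (/ INR N)); last by left; apply: Rinv_0_lt_compat.
  have : Rabs (y i * INR N - (IZR (up (y i * INR N)) - 1)) < 1.
    apply: Rabs_def1; lra.
  have := Rinv_0_lt_compat _ hNp. nra.
split=> // w hw.
have := sd_tri w (cen n (pickle t)) y. rewrite (sd_sym (cen n _) y).
rewrite hrad in h1 hw. lra.
Qed.

Lemma condensation n (S : pt n -> Prop) : ~ countable_set S ->
  exists y, S y /\ forall r, 0 < r -> ~ countable_set (fun z => S z /\ sd z y < r).
Proof.
move=> hS. apply: NNPP => hn. apply: hS.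
apply: (@cnt_union _ _ (fun q x => sd x (cen n q) < rad n q /\
           countable_set (fun z => S z /\ sd z (cen n q) < rad n q))).
- move=> x hx.
  have : exists r, 0 < r /\ countable_set (fun z => S z /\ sd z x < r).
    apply: NNPP => h2; apply: hn; exists x; split => // r hr hc; apply: h2; by exists r.
  move=> [r [hr hc]].
  have [q [hq1 hq2]] := rat_approx x hr.
  exists q; split; first exact: hq1.
  apply: (cnt_sub hc) => z [hz1 hz2]; split => //; by apply: hq2.
- move=> q. case: (classic (countable_set (fun z => S z /\ sd z (cen n q) < rad n q))) => hc.
  + apply: (cnt_sub hc) => x [h1 [h2 _]]; by split.
  + by apply: cnt_empty => x [_ [_ h]].
Qed.

Lemma lastcE m (x : pt m.+1) : lastc x = x ord_max.
Proof. by []. Qed.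

Lemma lift_last m (a : pt m.+1) e : lift_pt a e ord_max = e.
Proof. by rewrite /lift_pt /= eqxx. Qed.

Lemma eball_lift_P m (a x : pt m.+1) e : 0 < e -> eball (lift_pt a e) e x -> Pn x.
Proof.
move=> he hb. rewrite /Pn lastcE.
have := coord_le_edist x (lift_pt a e) ord_max. rewrite lift_last.
move: hb; rewrite /eball => hb.
rewrite /Rabs; case: Rcase_abs; lra.
Qed.

Lemma PL_excl m (x : pt m.+1) : Pn x -> Ln x -> False.
Proof. rewrite /Pn /Ln; lra. Qed.

Lemma subset_closed m (A C S : pt m.+1 -> Prop) :
  eclosed_in_Ln C -> (forall x, C x -> ~ A x) -> (forall x, S x -> C x) ->
  tau_closed A S.
Proof.
move=> [hCL hC] hCA hS.
split; first by move=> x /hS /hCL h; right.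
split; first by move=> x [].
move=> a [hXa hSa].
case: hXa => [hPa | hLa].
- left; split => //. exists (lastc a / 2).
  move: (hPa); rewrite /Pn => hp.
  split; first lra. split; first lra.
  move=> x hx.
  have hPx : Pn x.
    rewrite /Pn lastcE. have := coord_le_edist x a ord_max.
    move: hx hp; rewrite /eball lastcE => hx hp.
    rewrite /Rabs; case: Rcase_abs; lra.
  split; first by left.
  move=> /hS /hCL; exact: PL_excl hPx.
- case: (classic (A a)) => hAa.
  + right; left; split => //; split => //.
    have hCa : ~ C a by move=> /hCA.
    have [e [he H]] := hC a hLa hCa.
    exists e; split => // x hx hXx; split => // /hS hCx.
    by apply: (H x (hCL _ hCx) hx).
  + right; right; split => //; split => //.
    exists 1; split; first lra.
    move=> x [-> | hx]; first by split => //; right.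
    have hPx := eball_lift_P Rlt_0_1 hx.
    split; first by left.
    move=> /hS /hCL; exact: PL_excl hPx.
Qed.

Lemma open_tball m (A U : pt m.+1 -> Prop) a :
  Ln a -> ~ A a -> tau_open A U -> U a ->
  exists e, 0 < e /\ forall x, tball a e x -> U x.
Proof.
move=> hL hA [_ hU] hUa.
case: (hU a hUa) => [[hP _] | [[_ [hA' _]] | [_ [_ H]]]] //.
by case: (PL_excl hP hL).
Qed.

Lemma fin_avoid n (d : nat -> pt n) s (y : pt n) :
  (forall i, (i <= s)%N -> y <> d i) ->
  exists rho, 0 < rho /\ forall z, sd z y < rho -> forall i, (i <= s)%N -> z <> d i.
Proof.
elim: s => [|s IH] H.
- have hp : 0 < sd (d 0%N) y by apply: sd_pos => e; apply: (H 0%N) => //.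
  exists (sd (d 0%N) y); split => // z hz i hi ez.
  have ei : i = 0%N by lia.
  move: hz; rewrite ez ei. lra.
- have [rho [hr Hr]] : exists rho, 0 < rho /\ forall z, sd z y < rho -> forall i, (i <= s)%N -> z <> d i.
    by apply: IH => i hi; apply: H; lia.
  have hp : 0 < sd (d s.+1) y by apply: sd_pos => e; apply: (H s.+1) => //.
  exists (Rmin rho (sd (d s.+1) y)); split; first by apply: Rmin_pos.
  move=> z hz i hi.
  have h1 := Rmin_l rho (sd (d s.+1) y). have h2 := Rmin_r rho (sd (d s.+1) y).
  case: (leqP i s) => hi'.
  + apply: Hr => //; lra.
  + have ei : i = s.+1 by lia. move=> ez; move: hz; rewrite ez ei; lra.
Qed.

Lemma arch_inv eps : 0 < eps -> exists s : nat, / INR s.+1 < eps.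
Proof.
move=> he. have [N [hN hN0]] := archimed_cor1 eps he.
exists N.-1. have -> : N.-1.+1 = N by lia. done.
Qed.

Lemma inv_INR_le (s t : nat) : (s <= t)%N -> / INR t.+1 <= / INR s.+1.
Proof.
move=> h. apply: Rinv_le_contravar; first by apply: lt_0_INR; lia.
apply: le_INR; lia.
Qed.

Lemma inv_INR_pos (s : nat) : 0 < / INR s.+1.
Proof. apply: Rinv_0_lt_compat; apply: lt_0_INR; lia. Qed.

Definition Fs m (C : pt m.+1 -> Prop) (d : nat -> pt m.+1) (delta : nat -> R) (s : nat) (y : pt m.+1) :=
  C y /\ (forall j, y <> d j) /\ exists e, / INR s.+1 <= e /\ exists mm : nat, (mm <= s)%N /\
    forall j z, tball y e z -> tball (d j) (delta j) z -> exists i, (i < mm)%N /\ d i = d j.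

Definition cond n (C : pt n -> Prop) (y : pt n) :=
  forall r, 0 < r -> ~ countable_set (fun z => C z /\ sd z y < r).

Lemma core_step m (C : pt m.+1 -> Prop) (d : nat -> pt m.+1) (delta : nat -> R) s c r :
  (forall x, C x -> Ln x) ->
  (forall j, C (d j)) ->
  (forall c r, 0 < r -> ~ countable_set (fun z => C z /\ sd z c < r) ->
      exists j, sd (d j) c < r /\ cond C (d j)) ->
  (forall j, 0 < delta j) ->
  0 < r -> ~ countable_set (fun z => C z /\ sd z c < r) ->
  exists c' r', 0 < r' /\ r' <= / INR s.+2 /\ ~ countable_set (fun z => C z /\ sd z c' < r') /\
    forall z, sd z c' <= r' -> sd z c < r /\ (forall i, (i <= s)%N -> z <> d i) /\ ~ Fs C d delta s z.
Proof.
move=> hCL hdC Dgood hdel hr hunc.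
pose Z' := fun z => exists i, (i <= s)%N /\ z = d i.
have hS := uncnt_diff hunc (cnt_range d (fun i => (i <= s)%N)).
have [y [[[hCy hyc] hyZ] hcond]] := condensation hS.
have [rho1 [hr1 H1]] : exists rho, 0 < rho /\ forall z, sd z y < rho -> forall i, (i <= s)%N -> z <> d i.
  apply: fin_avoid => i hi e; apply: hyZ; by exists i.
pose rho0 := r - sd y c.
have hr0 : 0 < rho0 by rewrite /rho0; lra.
pose mu := Rmin (rho0 / 2) rho1.
have hmu : 0 < mu by apply: Rmin_pos; lra.
have hmu1 : mu <= rho0 / 2 by apply: Rmin_l.
have hmu2 : mu <= rho1 by apply: Rmin_r.
have hunc2 : ~ countable_set (fun z => C z /\ sd z y < mu / 2).
  move=> hc; apply: (hcond (mu / 2) ltac:(lra)).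
  by apply: (cnt_sub hc) => z [[[hz1 _] _] hz2].
have [j [hj hcj]] := Dgood y (mu / 2) ltac:(lra) hunc2.
have hjZ : forall i, (i <= s)%N -> d j <> d i by apply: H1; lra.
pose t0 := Rmin (/ INR s.+1) (delta j).
have ht0 : 0 < t0 by apply: Rmin_pos; [apply: inv_INR_pos | apply: hdel].
have hM : 0 < INR m.+1 by apply: lt_0_INR; lia.
pose r' := Rmin (Rmin (mu / 4) (/ INR s.+2)) (t0 / (2 * INR m.+1)).
have hr'1 : r' <= Rmin (mu / 4) (/ INR s.+2) by apply: Rmin_l.
have hr'2 : r' <= t0 / (2 * INR m.+1) by apply: Rmin_r.
have hr'3 := Rmin_l (mu / 4) (/ INR s.+2).
have hr'4 := Rmin_r (mu / 4) (/ INR s.+2).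
have hr'pos : 0 < r'.
  apply: Rmin_pos; first by apply: Rmin_pos; [lra | apply: inv_INR_pos].
  apply: Rdiv_lt_0_compat => //; lra.
exists (d j), r'; split => //; split; first lra.
split; first by apply: hcj.
move=> z hz.
have hzy : sd z y < mu.
  have := sd_tri z (d j) y. lra.
split.
  have := sd_tri z y c. rewrite /rho0 in hmu1. lra.
split; first by apply: H1; lra.
move=> [hCz [_ [e [he [mm [hmm P]]]]]].
have hLz := hCL z hCz. have hLd := hCL (d j) (hdC j).
have hdj := hdel j.
have [w [hw1 hw2]] : exists w, tball z e w /\ tball (d j) (delta j) w.
  apply: (@tangent_meet m z (d j) r' e (delta j)).
  - by move: hLz; rewrite /Ln lastcE.
  - by move: hLd; rewrite /Ln lastcE.
  - have := inv_INR_pos s; lra.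
  - exact: hdj.
  - lra.
  - move=> i; have := sd_coord z (d j) i; lra.
  - have h1 : INR m.+1 * r' <= t0 / 2.
      have -> : t0 / 2 = INR m.+1 * (t0 / (2 * INR m.+1)) by field; lra.
      apply: Rmult_le_compat_l; lra.
    have h2 : t0 <= Rmin e (delta j).
      apply: Rmin_glb.
      + have := Rmin_l (/ INR s.+1) (delta j); rewrite -/t0; lra.
      + exact: Rmin_r.
    lra.
have [i [hi ei]] := P j w hw1 hw2.
apply: (hjZ i); [lia | by rewrite ei].
Qed.

Lemma abs_bounds a b e : Rabs (a - b) <= e -> b - e <= a /\ a <= b + e.
Proof. rewrite /Rabs; case: Rcase_abs; lra. Qed.

Lemma abs_of_bounds a b e : b - e <= a -> a <= b + e -> Rabs (a - b) <= e.
Proof. rewrite /Rabs; case: Rcase_abs; lra. Qed.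

Lemma sd_self n (x : pt n) r : 0 <= r -> sd x x <= r.
Proof. move=> h; apply: sd_le => // i. rewrite Rminus_diag Rabs_R0 //. Qed.

Lemma core m (C : pt m.+1 -> Prop) (d : nat -> pt m.+1) (delta : nat -> R) :
  eclosed_in_Ln C -> ~ countable_set C -> (forall j, C (d j)) ->
  (forall c r, 0 < r -> ~ countable_set (fun z => C z /\ sd z c < r) ->
      exists j, sd (d j) c < r /\ cond C (d j)) ->
  (forall j, 0 < delta j) ->
  (forall y, C y -> (forall j, y <> d j) -> exists e, 0 < e /\ exists mm : nat,
     forall j z, tball y e z -> tball (d j) (delta j) z -> exists i, (i < mm)%N /\ d i = d j) ->
  False.
Proof.
move=> hC hunc hdC Dgood hdel H.
have hCL := proj1 hC.
have [y0 [hy0 hc0]] := condensation hunc.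
pose p0 := (y0, 1).
pose Inv s (p : pt m.+1 * R) := 0 < p.2 /\ p.2 <= / INR s.+1 /\
   ~ countable_set (fun z => C z /\ sd z p.1 < p.2).
pose Rel s (p p' : pt m.+1 * R) := forall z, sd z p'.1 <= p'.2 ->
   sd z p.1 < p.2 /\ (forall i, (i <= s)%N -> z <> d i) /\ ~ Fs C d delta s z.
pose g s p := epsilon (inhabits p0) (fun p' => Inv s.+1 p' /\ Rel s p p').
pose sq := fix f (s : nat) : pt m.+1 * R := if s is s'.+1 then g s' (f s') else p0.
have hstep : forall s p, Inv s p -> Inv s.+1 (g s p) /\ Rel s p (g s p).
  move=> s [c r] [h1 [h2 h3]].
  apply: (epsilon_spec (inhabits p0) (fun p' => Inv s.+1 p' /\ Rel s (c, r) p')).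
  have [c' [r' [a1 [a2 [a3 a4]]]]] := core_step s hCL hdC Dgood hdel h1 h3.
  by exists (c', r').
have hInv : forall s, Inv s (sq s).
  elim => [|s IH].
  - rewrite /Inv /= Rinv_1; split; first lra. split; first lra. apply: hc0; lra.
  - exact: (hstep s _ IH).1.
have hRel : forall s, Rel s (sq s) (sq s.+1) := fun s => (hstep s _ (hInv s)).2.
pose c s := (sq s).1. pose r s := (sq s).2.
have hr0 : forall s, 0 < r s := fun s => (hInv s).1.
have hr1 : forall s, r s <= / INR s.+1 := fun s => (hInv s).2.1.
have nest0 : forall s k z, sd z (c (s + k)%N) <= r (s + k)%N -> sd z (c s) <= r s.
  move=> s; elim => [|k IH] z hz; first by rewrite addn0 in hz.
  apply: IH. rewrite addnS in hz. left. exact: (hRel (s + k)%N z hz).1.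
have nest : forall s t z, (s <= t)%N -> sd z (c t) <= r t -> sd z (c s) <= r s.
  move=> s t z hst; rewrite -(subnKC hst); exact: nest0.
have hcross : forall i s k, c s i - r s <= c k i + r k.
  move=> i s k. pose t := maxn s k.
  have ht : sd (c t) (c t) <= r t by apply: sd_self; have := hr0 t; lra.
  have h1 := nest s t (c t) (leq_maxl s k) ht.
  have h2 := nest k t (c t) (leq_maxr s k) ht.
  have [a1 a2] := abs_bounds (Rle_trans _ _ _ (sd_coord (c t) (c s) i) h1).
  have [b1 b2] := abs_bounds (Rle_trans _ _ _ (sd_coord (c t) (c k) i) h2).
  lra.
pose E i := fun v => exists s, v = c s i - r s.
have hlub : forall i, exists v, is_lub (E i) v.
  move=> i.
  have hb : bound (E i) by exists (c 0%N i + r 0%N) => v [s ->]; apply: hcross.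
  have hne : exists v, E i v by exists (c 0%N i - r 0%N), 0%N.
  have [v hv] := completeness (E i) hb hne. by exists v.
pose x : pt m.+1 := fun i => epsilon (inhabits 0) (is_lub (E i)).
have hx : forall i, is_lub (E i) (x i) := fun i => epsilon_spec _ _ (hlub i).
have hxs : forall s, sd x (c s) <= r s.
  move=> s; apply: sd_le; first by have := hr0 s; lra.
  move=> i; have [ub lub] := hx i.
  apply: abs_of_bounds.
  - apply: ub; by exists s.
  - apply: lub => v [k ->]; apply: hcross.
have hxd : forall j, x <> d j.
  move=> j; exact: ((hRel j x (hxs j.+1)).2.1 j (leqnn j)).
have hxF : forall s, ~ Fs C d delta s x := fun s => (hRel s x (hxs s.+1)).2.2.
have pts : forall s, exists p, C p /\ sd p (c s) < r s.
  move=> s; apply: NNPP => hn; apply: (hInv s).2.2.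
  apply: cnt_empty => z hz; apply: hn; by exists z.
have close : forall s p, sd p (c s) < r s -> forall i, Rabs (p i - x i) <= 2 * / INR s.+1.
  move=> s p hp i. have := sd_coord p x i. have := sd_tri p (c s) x.
  rewrite (sd_sym (c s) x). have := hxs s. have := hr1 s. lra.
have hxL : Ln x.
  rewrite /Ln lastcE. case: (Req_dec (x ord_max) 0) => // hv.
  have hav : 0 < Rabs (x ord_max) by apply: Rabs_pos_lt.
  have [s hs] := @arch_inv (Rabs (x ord_max) / 2) ltac:(lra).
  have [p [hp1 hp2]] := pts s.
  have := close s p hp2 ord_max.
  have := hCL p hp1. rewrite /Ln lastcE => ->.
  rewrite Rminus_0_l Rabs_Ropp. lra.
have hxC : C x.
  apply: NNPP => hnC. have [e [he Hx]] := (proj2 hC) x hxL hnC.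
  have hM : 0 < INR m.+1 by apply: lt_0_INR; lia.
  have [s hs] := @arch_inv (e / (2 * INR m.+1)) ltac:(apply: Rdiv_lt_0_compat; lra).
  have [p [hp1 hp2]] := pts s.
  apply: (Hx p (hCL p hp1)) => //.
  apply: (@edist_lt_coord m p x (2 * / INR s.+1)).
  - exact: close hp2.
  - have := inv_INR_pos s; lra.
  - have -> : e = INR m.+1 * (2 * (e / (2 * INR m.+1))) by field; lra.
    apply: Rmult_lt_compat_l => //; lra.
have [e [he [mm Hm]]] := H x hxC hxd.
have [s hs] := arch_inv he.
apply: (hxF (maxn s mm)).
split => //; split => //.
exists e; split.
  have := inv_INR_le (leq_maxl s mm); lra.
exists mm; split; first exact: leq_maxr.
exact: Hm.
Qed.

Lemma foldr_maxn_ge (T : Type) (f : T -> nat) (l : list T) V :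
  List.In V l -> (f V <= foldr (fun W acc => maxn (f W) acc) 0%N l)%N.
Proof.
elim: l => [|a l IH] //= [-> | h]; first exact: leq_maxl.
apply: leq_trans (IH h) _; exact: leq_maxr.
Qed.

Theorem mainTheorem19 (n : nat) (A : pt n -> Prop) :
  (2 <= n)%N ->
  (forall x, A x -> Ln x) ->
  (tau_normal A \/ tau_countably_paracompact A) ->
  ~ (exists C : pt n -> Prop,
       eclosed_in_Ln C /\
       (forall x, C x -> Ln x /\ ~ A x) /\
       ~ countable_set C).
Proof.
case: n A => [|m] A hn hAL hNP [C [hC [hCA hunc]]]; first by [].
have hCL : forall x, C x -> Ln x := fun x h => (hCA x h).1.
have hCnA : forall x, C x -> ~ A x := fun x h => (hCA x h).2.
have [y0 hy0] : exists y, C y.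
  apply: NNPP => hn0; apply: hunc; apply: cnt_empty => x hx; apply: hn0; by exists x.
pose P q y := C y /\ ((exists y', C y' /\ sd y' (cen m.+1 q) < rad m.+1 q /\ cond C y') ->
                      sd y (cen m.+1 q) < rad m.+1 q /\ cond C y).
pose d q := epsilon (inhabits y0) (P q).
have hd : forall q, P q (d q).
  move=> q; apply: (epsilon_spec (inhabits y0) (P q)).
  case: (classic (exists y', C y' /\ sd y' (cen m.+1 q) < rad m.+1 q /\ cond C y')).
  - move=> [y' [h1 [h2 h3]]]; exists y'; split => // _; by split.
  - move=> hn'; exists y0; split => // h; by case: hn'.
have hdC : forall j, C (d j) := fun j => (hd j).1.
have Dgood : forall c r, 0 < r -> ~ countable_set (fun z => C z /\ sd z c < r) ->
      exists j, sd (d j) c < r /\ cond C (d j).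
  move=> c r hr hu.
  have [y [[hCy hyc] hy]] := condensation hu.
  have hcy : cond C y.
    move=> r' hr' hc; apply: (hy r' hr'); apply: (cnt_sub hc) => z [[? _] ?]; by split.
  have hrho : 0 < r - sd y c by lra.
  have [q [hq1 hq2]] := rat_approx y hrho.
  have [h1 h2] := (hd q).2 (ex_intro _ y (conj hCy (conj hq1 hcy))).
  exists q; split => //.
  have := hq2 _ h1. have := sd_tri (d q) y c. lra.
have Dcl : forall S : pt m.+1 -> Prop, (forall x, S x -> C x) -> tau_closed A S.
  move=> S hS; exact: subset_closed hC hCnA hS.
case: hNP => [hN | hP].
-
  have hE : tau_closed A (fun z => exists j, z = d j).
    apply: Dcl => z [j ->]; exact: hdC.
  have hF : tau_closed A (fun z => C z /\ ~ exists j, z = d j).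
    apply: Dcl => z []; done.
  have hEF : disjoint_sets (fun z => exists j, z = d j) (fun z => C z /\ ~ exists j, z = d j).
    by move=> z h1 [_ h2].
  have [U [V [hU [hV [hEU [hFV hUV]]]]]] := hN _ _ hE hF hEF.
  pose delta j := epsilon (inhabits 1) (fun e => 0 < e /\ forall x, tball (d j) e x -> U x).
  have hdel : forall j, 0 < delta j /\ forall x, tball (d j) (delta j) x -> U x.
    move=> j; apply: (epsilon_spec (inhabits 1) (fun e => 0 < e /\ forall x, tball (d j) e x -> U x)).
    apply: (open_tball (hCL _ (hdC j)) (hCnA _ (hdC j)) hU); apply: hEU; by exists j.
  apply: (@core m C d delta hC hunc hdC Dgood (fun j => (hdel j).1)).
  move=> y hy hyd.
  have [e [he He]] : exists e, 0 < e /\ forall x, tball y e x -> V x.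
    apply: (open_tball (hCL _ hy) (hCnA _ hy) hV); apply: hFV; split => // [[j ej]]; exact: hyd ej.
  exists e; split => //; exists 0%N => j z hz1 hz2.
  by case: (hUV z ((hdel j).2 z hz2) (He z hz1)).
-
  pose Sk k := fun x => (exists j, x = d j) /\ forall j, (j < k)%N -> x <> d j.
  pose Uk k := fun x => Xn x /\ ~ Sk k x.
  have hUk : forall k, tau_open A (Uk k).
    move=> k; apply: (Dcl (Sk k) _).2 => x [[j ->] _]; exact: hdC.
  have hcov : forall x, Xn x -> exists k, Uk k x.
    move=> x hx. case: (classic (exists j, x = d j)) => [[j ej] | hnd].
    + exists j.+1; split => // [[_ H]]; apply: (H j) => //.
    + exists 0%N; split => // [[H _]]; exact: hnd H.
  have [W [hWo [hWr [hWc hWl]]]] := hP Uk hUk hcov.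
  have hXd : forall j, Xn (d j) := fun j => or_intror (hCL _ (hdC j)).
  pose Pd j e := 0 < e /\ exists V, W V /\ forall x, tball (d j) e x -> V x.
  pose delta j := epsilon (inhabits 1) (Pd j).
  have hdel : forall j, Pd j (delta j).
    move=> j; apply: (epsilon_spec (inhabits 1) (Pd j)).
    have [V [hWV hVd]] := hWc _ (hXd j).
    have [e [he He]] := open_tball (hCL _ (hdC j)) (hCnA _ (hdC j)) (hWo V hWV) hVd.
    exists e; split => //; by exists V.
  apply: (@core m C d delta hC hunc hdC Dgood (fun j => (hdel j).1)).
  move=> y hy hyd.
  have [O [hO [hOy [l hl]]]] := hWl y (or_intror (hCL _ hy)).
  have [e [he He]] := open_tball (hCL _ hy) (hCnA _ hy) hO hOy.
  pose kf V := epsilon (inhabits 0%N) (fun k => forall x, V x -> Uk k x).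
  exists e; split => //.
  exists (foldr (fun V acc => maxn (kf V) acc) 0%N l) => j z hz1 hz2.
  have [_ [Vj [hWVj hVj]]] := hdel j.
  have hin : List.In Vj l.
    apply: hl => //; exists z; split; [exact: He | exact: hVj].
  have hkf : forall x, Vj x -> Uk (kf Vj) x.
    apply: (epsilon_spec (inhabits 0%N) (fun k => forall x, Vj x -> Uk k x)).
    exact: hWr.
  have hU := hkf (d j) (hVj _ (or_introl erefl)).
  have hle := foldr_maxn_ge kf hin.
  apply: NNPP => hne; apply: hU.2; split; first by exists j.
  move=> i hi e'; apply: hne; exists i; split; first by apply: leq_trans hi hle.
  by rewrite e'.
Qed.
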